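(* Let $B$ be a log-product expression of degree $n\geq 2$. Then there are homogeneous expressions $X$ and $Y$ such that $B\equiv X\cdot Y$ and $n/3 \leq \deg X \le 2n/3$ and $n/3\le \deg Y \leq 2n/3$.
   Context: Regular expressions (without star, without $\emptyset$) are built from $\epsilon$ and letters by union and concatenation; $R\equiv R'$ means they describe the same language. A homogeneous expression describes a language all of whose words have the same length, its degree $\deg R$. A homogeneous expression $B$ is log-product if it is a letter, or there are homogeneous expressions $B_1,B_2$ with $B_1$ log-product, $\deg B_1\ge\deg B_2$ and $B=B_1B_2$ or $B=B_2B_1$. *)

(* Defs.v *)
From mathcomp Require Import all_boot.
Set Implicit Arguments. Unset Strict Implicit. Unset Printing Implicit Defensive.

Inductive rexp (A : Type) : Type :=
| Eps : rexp A
| Let : A -> rexp A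
| Union : rexp A -> rexp A -> rexp A
| Cat : rexp A -> rexp A -> rexp A.

Arguments Eps {A}.

Fixpoint in_lang (A : Type) (R : rexp A) (w : seq A) : Prop :=
  match R with
  | Eps => w = [::]
  | Let a => w = [:: a]
  | Union R1 R2 => in_lang R1 w \/ in_lang R2 w
  | Cat R1 R2 => exists u v, w = u ++ v /\ in_lang R1 u /\ in_lang R2 v
  end.

Definition requiv (A : Type) (R R' : rexp A) : Prop :=
  forall w, in_lang R w <-> in_lang R' w.

(* R is homogeneous of degree d: every word of L(R) has length d.
   (L(R) is never empty, so d is unique.) *)
Definition hom_deg (A : Type) (R : rexp A) (d : nat) : Prop :=
  forall w, in_lang R w -> size w = d.

Inductive logprod (A : Type) : rexp A -> Prop :=
| lp_let : forall a, logprod (Let a)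
| lp_catl : forall B1 B2 d1 d2, logprod B1 -> hom_deg B1 d1 -> hom_deg B2 d2 ->
    d2 <= d1 -> logprod (Cat B1 B2)
| lp_catr : forall B1 B2 d1 d2, logprod B1 -> hom_deg B1 d1 -> hom_deg B2 d2 ->
    d2 <= d1 -> logprod (Cat B2 B1).

(* Main.v *)
Require Import Defs.
From mathcomp Require Import all_boot.
From mathcomp Require Import zify.

Section S.
Variable A : Type.

Lemma nonempty (R : rexp A) : exists w, in_lang R w.
Proof.
elim: R => [|a|R1 [u Hu] R2 _|R1 [u Hu] R2 [v Hv]] /=.
- by exists [::].
- by exists [:: a].
- by exists u; left.
- by exists (u ++ v), u, v.
Qed.

Lemma hom_cat (X Y : rexp A) a b :
  hom_deg X a -> hom_deg Y b -> hom_deg (Cat X Y) (a + b).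
Proof.
move=> HX HY w [u [v [-> [Hu Hv]]]].
by rewrite size_cat (HX _ Hu) (HY _ Hv).
Qed.

Lemma hom_uniq (R : rexp A) a b : hom_deg R a -> hom_deg R b -> a = b.
Proof.
move=> Ha Hb; case: (nonempty R) => w Hw.
by rewrite -(Ha _ Hw) -(Hb _ Hw).
Qed.

Arguments hom_cat {X Y a b}.
Arguments hom_uniq {R a b}.

Lemma rtrans (X Y Z : rexp A) : requiv X Y -> requiv Y Z -> requiv X Z.
Proof. by move=> H1 H2 w; rewrite H1 H2. Qed.

Lemma rsym (X Y : rexp A) : requiv X Y -> requiv Y X.
Proof. by move=> H w; rewrite H. Qed.

Lemma rassoc (X Y Z : rexp A) : requiv (Cat (Cat X Y) Z) (Cat X (Cat Y Z)).
Proof.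
move=> w /=; split.
- move=> [u [v [-> [[u1 [u2 [-> [H1 H2]]]] H3]]]].
  exists u1, (u2 ++ v); split; first by rewrite catA.
  by split => //; exists u2, v.
- move=> [u [v [-> [H1 [v1 [v2 [-> [H2 H3]]]]]]]].
  exists (u ++ v1), v2; split; first by rewrite catA.
  by split => //; exists u, v1.
Qed.

Lemma rcongl (X X' Y : rexp A) : requiv X X' -> requiv (Cat X Y) (Cat X' Y).
Proof.
move=> H w /=; split; move=> [u [v [-> [H1 H2]]]]; exists u, v;
  by split => //; split => //; apply/H.
Qed.

Lemma rcongr (X Y Y' : rexp A) : requiv Y Y' -> requiv (Cat X Y) (Cat X Y').
Proof.
move=> H w /=; split; move=> [u [v [-> [H1 H2]]]]; exists u, v;
  by split => //; split => //; apply/H.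
Qed.

Arguments rtrans {X Y Z}.
Arguments rsym {X Y}.
Arguments rcongr {X Y Y'}.
Arguments rcongl {X X' Y}.

Lemma reps (X : rexp A) : requiv X (Cat Eps (Cat X Eps)).
Proof.
move=> w /=; split.
- by move=> H; exists [::], w; split => //; split => //; exists w, [::]; rewrite cats0.
- by move=> [u [v [-> [-> [v1 [v2 [-> [H ->]]]]]]]]; rewrite cats0.
Qed.

Lemma key (D : rexp A) : logprod D -> forall n d P Q p q,
  2 <= n -> hom_deg D d -> hom_deg P p -> hom_deg Q q -> n = p + d + q ->
  3 * p < n -> 2 * n < 3 * (p + d) ->
  exists (X Y : rexp A) (dX dY : nat),
    hom_deg X dX /\ hom_deg Y dY /\ requiv (Cat P (Cat D Q)) (Cat X Y) /\
    n <= 3 * dX /\ 3 * dX <= 2 * n /\ n <= 3 * dY /\ 3 * dY <= 2 * n.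
Proof.
elim=> [a|B1 B2 d1 d2 LB1 IH H1 H2 Hle|B1 B2 d1 d2 LB1 IH H1 H2 Hle]
  n d P Q p q Hn HD HP HQ En Hp Hd.
- have H1' : hom_deg (Let a) 1 by move=> w ->.
  have E1 := hom_uniq HD H1'.
  lia.
- have Ed : d = d1 + d2 by exact: (hom_uniq HD (hom_cat H1 H2)).
  subst d.
  case: (boolP (2 * n < 3 * (p + d1))) => Hc.
  + have [X [Y [dX [dY [HX [HY [HR R]]]]]]] :=
      IH n d1 P (Cat B2 Q) p (d2 + q) Hn H1 HP (hom_cat H2 HQ) ltac:(lia) Hp Hc.
    exists X, Y, dX, dY; split => //; split => //; split => //.
    apply: rtrans HR; apply: rcongr; exact: rassoc.
  + exists (Cat P B1), (Cat B2 Q), (p + d1), (d2 + q).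
    split; first exact: hom_cat.
    split; first exact: hom_cat.
    split; last lia.
    apply: rtrans (rcongr (rassoc _ _ _)) _; apply: rsym; exact: rassoc.
- have Ed : d = d2 + d1 by exact: (hom_uniq HD (hom_cat H2 H1)).
  subst d.
  case: (boolP (3 * (p + d2) < n)) => Hc.
  + have [X [Y [dX [dY [HX [HY [HR R]]]]]]] :=
      IH n d1 (Cat P B2) Q (p + d2) q Hn H1 (hom_cat HP H2) HQ ltac:(lia) Hc ltac:(lia).
    exists X, Y, dX, dY; split => //; split => //; split => //.
    apply: rtrans HR.
    apply: rtrans (rcongr (rassoc _ _ _)) _; apply: rsym; exact: rassoc.
  + exists (Cat P B2), (Cat B1 Q), (p + d2), (d1 + q).
    split; first exact: hom_cat.
    split; first exact: hom_cat.
    split; last lia.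
    apply: rtrans (rcongr (rassoc _ _ _)) _; apply: rsym; exact: rassoc.
Qed.

End S.

Theorem proposition6p8 (A : Type) (B : rexp A) (n : nat) :
  logprod B -> hom_deg B n -> 2 <= n ->
  exists (X Y : rexp A) (dX dY : nat),
    hom_deg X dX /\ hom_deg Y dY /\ requiv B (Cat X Y) /\
    n <= 3 * dX /\ 3 * dX <= 2 * n /\ n <= 3 * dY /\ 3 * dY <= 2 * n.
Proof.
move=> LB HB Hn.
have HE : hom_deg (@Eps A) 0 by move=> w ->.
have [X [Y [dX [dY [HX [HY [HR R]]]]]]] :=
  @key A B LB n n Eps Eps 0 0 Hn HB HE HE ltac:(lia) ltac:(lia) ltac:(lia).
exists X, Y, dX, dY; split => //; split => //; split => //.
exact: (@rtrans A _ _ _ (@reps A B) HR).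
Qed.
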